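(* Let $\mathcal{H}$ be a (possibly infinite-dimensional) complex Hilbert space, let $\hat H_{\mathrm{on}}$ be a Hamiltonian (self-adjoint operator) on $\mathcal{H}$, and let $|\psi_{\mathrm{off}}\rangle,|\psi_{\mathrm{on}}\rangle$ be orthonormal vectors with $r_0:=\langle\psi_{\mathrm{off}}|\hat H_{\mathrm{on}}|\psi_{\mathrm{off}}\rangle\neq 0$. Define $$\hat H=\hat H_{\mathrm{on}}-\hat H_{\mathrm{on}}|\psi_{\mathrm{off}}\rangle\langle\psi_{\mathrm{off}}|\hat H_{\mathrm{on}}/r_0,$$ and $|\psi_{\mathrm{on}}(t)\rangle:=e^{-\mathrm{i}t\hat H_{\mathrm{on}}}|\psi_{\mathrm{on}}\rangle$. Let $L>0$ and suppose $\langle\psi_{\mathrm{off}}|\psi_{\mathrm{on}}(t)\rangle=0$ for all $t\in[0,L]$. Then for all $t\in[0,L]$, $$e^{-\mathrm{i}t\hat H}|\psi_{\mathrm{off}}\rangle=|\psi_{\mathrm{off}}\rangle\qquad\text{and}\qquad e^{-\mathrm{i}t\hat H}|\psi_{\mathrm{on}}\rangle=|\psi_{\mathrm{on}}(t)\rangle.$$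
   Context: In the paper the length of the time interval is $L=x_0T_0$, where $x_0$ is a positive integer and $T_0>0$ is the clock period. *)

(* Defs.v *)
(* Unbounded self-adjoint operators are
   given by a domain D and an action H on D; e^{-itH} is characterised as
   the strongly continuous unitary group with generator -iH (Stone). *)
From mathcomp Require Import all_boot all_order all_algebra.
From mathcomp Require Import reals.
From mathcomp Require Import complex.
Set Implicit Arguments. Unset Strict Implicit. Unset Printing Implicit Defensive.
Import Order.TTheory GRing.Theory Num.Theory.
Local Open Scope ring_scope.
Local Open Scope complex_scope.

Section Hilbert.
Variables (R : realType) (V : lmodType R[i]).

(* <x|y>: antilinear in the first, linear in the second argument. *)
Definition inner_product (ip : V -> V -> R[i]) : Prop :=
  [/\ (forall a x y z, ip x (a *: y + z) = a * ip x y + ip x z),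
      (forall x y, ip x y = (ip y x)^*),
      (forall x, 0 <= complex.Re (ip x x) /\ complex.Im (ip x x) = 0)
    & (forall x, ip x x = 0 -> x = 0)].

Definition normv (ip : V -> V -> R[i]) (x : V) : R := Num.sqrt (complex.Re (ip x x)).

Definition seq_cvg ip (u : nat -> V) (l : V) : Prop :=
  forall e : R, 0 < e -> exists N : nat, forall n, (N <= n)%N -> normv ip (u n - l) < e.

Definition seq_cauchy ip (u : nat -> V) : Prop :=
  forall e : R, 0 < e -> exists N : nat, forall m n, (N <= m)%N -> (N <= n)%N ->
    normv ip (u m - u n) < e.

Definition hilbert_space (ip : V -> V -> R[i]) : Prop :=
  inner_product ip /\
  (forall u, seq_cauchy ip u -> exists l, seq_cvg ip u l).

(* (D, H) is a densely defined linear operator on V with domain D,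
   and it is self-adjoint: its adjoint (as a relation) equals it. *)
Definition self_adjoint (ip : V -> V -> R[i]) (D : V -> Prop) (H : V -> V) : Prop :=
  [/\ D 0,
      (forall a x y, D x -> D y -> D (a *: x + y) /\ H (a *: x + y) = a *: H x + H y),
      (forall x (e : R), 0 < e -> exists y, D y /\ normv ip (x - y) < e)
    & (forall y z, (D y /\ H y = z) <-> (forall x, D x -> ip (H x) y = ip x z))].

Definition lim_at (f : R -> R) (t0 l : R) : Prop :=
  forall e : R, 0 < e -> exists2 d : R, 0 < d &
    forall t, t != t0 -> `|t - t0| < d -> `|f t - l| < e.

(* U is the strongly continuous one-parameter unitary group
   t |-> e^{-itH} generated by the self-adjoint operator (D, H):
   its generator (the strong derivative at 0) is -iH with domain exactly D. *)
Definition unitary_group_of (ip : V -> V -> R[i]) (D : V -> Prop) (H : V -> V)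
    (U : R -> V -> V) : Prop :=
  [/\ (forall t a x y, U t (a *: x + y) = a *: U t x + U t y),
      (forall t x y, ip (U t x) (U t y) = ip x y),
      (forall x, U 0 x = x),
      (forall s t x, U (s + t) x = U s (U t x))
    & (forall x t0, lim_at (fun t => normv ip (U t x - U t0 x)) t0 0)] /\
    (forall x y, (D x /\ y = - 'i *: H x) <->
         lim_at (fun h => normv ip (h^-1%:C *: (U h x - x) - y)) 0 0).

End Hilbert.

(* Main.v *)
Require Import Defs.
From mathcomp Require Import all_boot all_order all_algebra.
From mathcomp Require Import boolp classical_sets reals.
From mathcomp Require Import complex.
From mathcomp Require Import ring lra.
Set Implicit Arguments. Unset Strict Implicit. Unset Printing Implicit Defensive.
Import Order.TTheory GRing.Theory Num.Theory.
Local Open Scope ring_scope.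
Local Open Scope complex_scope.

Lemma ReC (R : realType) (r : R) (z : R[i]) : complex.Re (r%:C * z) = r * complex.Re z.
Proof. by case: z => a b /=; rewrite mul0r subr0. Qed.
Lemma ImC (R : realType) (r : R) (z : R[i]) : complex.Im (r%:C * z) = r * complex.Im z.
Proof. by case: z => a b /=; rewrite mul0r addr0. Qed.
Lemma ReD (R : realType) (z w : R[i]) : complex.Re (z + w) = complex.Re z + complex.Re w.
Proof. by case: z => a b; case: w. Qed.
Lemma ImD (R : realType) (z w : R[i]) : complex.Im (z + w) = complex.Im z + complex.Im w.
Proof. by case: z => a b; case: w. Qed.
Lemma ReN (R : realType) (z : R[i]) : complex.Re (- z) = - complex.Re z.
Proof. by case: z. Qed.
Lemma ImN (R : realType) (z : R[i]) : complex.Im (- z) = - complex.Im z.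
Proof. by case: z. Qed.
Lemma ReJ (R : realType) (z : R[i]) : complex.Re (conjc z) = complex.Re z.
Proof. by case: z. Qed.
Lemma Re_mi (R : realType) (z : R[i]) : complex.Re (conjc 'i * z) = complex.Im z.
Proof. case: z => a b /=; ring. Qed.
Lemma complex_eq (R : realType) (z w : R[i]) :
  complex.Re z = complex.Re w -> complex.Im z = complex.Im w -> z = w.
Proof. by case: z => a b; case: w => c d /= -> ->. Qed.

Lemma cjD (R : realType) (z w : R[i]) : conjc (z + w) = conjc z + conjc w.
Proof. by case: z => a b; case: w => c d; apply: complex_eq => /=; ring. Qed.
Lemma cjN (R : realType) (z : R[i]) : conjc (- z) = - conjc z.
Proof. by case: z => a b; apply: complex_eq => /=; ring. Qed.
Lemma cjM (R : realType) (z w : R[i]) : conjc (z * w) = conjc z * conjc w.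
Proof. by case: z => a b; case: w => c d; apply: complex_eq => /=; ring. Qed.

Lemma ipDr (R : realType) (V : lmodType R[i]) (ip : V -> V -> R[i]) :
  inner_product ip -> forall x y z, ip x (y + z) = ip x y + ip x z.
Proof. by case=> H1 _ _ _ x y z; rewrite -[y]scale1r H1 mul1r scale1r. Qed.
Lemma ip0r (R : realType) (V : lmodType R[i]) (ip : V -> V -> R[i]) :
  inner_product ip -> forall x, ip x 0 = 0.
Proof. by move=> P x; apply: (@addrI _ (ip x 0)); rewrite -ipDr // !addr0. Qed.
Lemma ipZr (R : realType) (V : lmodType R[i]) (ip : V -> V -> R[i]) :
  inner_product ip -> forall a x y, ip x (a *: y) = a * ip x y.
Proof. move=> P a x y; have [H1 _ _ _] := P; have := H1 a x y 0.
 by rewrite addr0 ip0r // addr0. Qed.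
Lemma ipNr (R : realType) (V : lmodType R[i]) (ip : V -> V -> R[i]) :
  inner_product ip -> forall x y, ip x (- y) = - ip x y.
Proof. by move=> P x y; rewrite -scaleN1r ipZr // mulN1r. Qed.
Lemma ipBr (R : realType) (V : lmodType R[i]) (ip : V -> V -> R[i]) :
  inner_product ip -> forall x y z, ip x (y - z) = ip x y - ip x z.
Proof. by move=> P x y z; rewrite ipDr // ipNr. Qed.
Lemma ipC (R : realType) (V : lmodType R[i]) (ip : V -> V -> R[i]) :
  inner_product ip -> forall x y, ip x y = conjc (ip y x).
Proof. by case. Qed.
Lemma ipDl (R : realType) (V : lmodType R[i]) (ip : V -> V -> R[i]) :
  inner_product ip -> forall x y z, ip (y + z) x = ip y x + ip z x.
Proof. by move=> P x y z; rewrite ipC // ipDr // cjD -!(ipC P). Qed.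
Lemma ipZl (R : realType) (V : lmodType R[i]) (ip : V -> V -> R[i]) :
  inner_product ip -> forall a x y, ip (a *: y) x = conjc a * ip y x.
Proof. by move=> P a x y; rewrite ipC // ipZr // cjM -!(ipC P). Qed.
Lemma ipNl (R : realType) (V : lmodType R[i]) (ip : V -> V -> R[i]) :
  inner_product ip -> forall x y, ip (- y) x = - ip y x.
Proof. by move=> P x y; rewrite ipC // ipNr // cjN -!(ipC P). Qed.
Lemma ipBl (R : realType) (V : lmodType R[i]) (ip : V -> V -> R[i]) :
  inner_product ip -> forall x y z, ip (y - z) x = ip y x - ip z x.
Proof. by move=> P x y z; rewrite ipDl // ipNl. Qed.
Lemma conjc0' (R : realType) : conjc (0 : R[i]) = 0.
Proof. by apply: complex_eq => /=; ring. Qed.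
Lemma ip0l (R : realType) (V : lmodType R[i]) (ip : V -> V -> R[i]) :
  inner_product ip -> forall x, ip 0 x = 0.
Proof. by move=> P x; rewrite ipC // ip0r // conjc0'. Qed.

Lemma cjR (R : realType) (r : R) : conjc (r%:C) = r%:C.
Proof. by apply: complex_eq => /=; ring. Qed.

Lemma ipxx (R : realType) (V : lmodType R[i]) (ip : V -> V -> R[i]) :
  inner_product ip -> forall x, 0 <= complex.Re (ip x x) /\ complex.Im (ip x x) = 0.
Proof. by case. Qed.

Lemma nv_ge0 (R : realType) (V : lmodType R[i]) (ip : V -> V -> R[i]) x :
  0 <= normv ip x.
Proof. exact: sqrtr_ge0. Qed.

Lemma nv_sq (R : realType) (V : lmodType R[i]) (ip : V -> V -> R[i]) :
  inner_product ip -> forall x, normv ip x ^+ 2 = complex.Re (ip x x).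
Proof. by move=> P x; rewrite /normv sqr_sqrtr //; case: (ipxx P x). Qed.

Lemma re0_eq0 (R : realType) (V : lmodType R[i]) (ip : V -> V -> R[i]) :
  inner_product ip -> forall x, complex.Re (ip x x) = 0 -> x = 0.
Proof.
move=> P x H; have [_ _ _ P4] := P; apply: P4; apply: complex_eq => //=.
by case: (ipxx P x).
Qed.

Lemma CS_re (R : realType) (V : lmodType R[i]) (ip : V -> V -> R[i]) :
  inner_product ip -> forall u v,
  `|complex.Re (ip u v)| <= normv ip u * normv ip v.
Proof.
move=> P u v.
have nu0 := nv_ge0 ip u; have nv0 := nv_ge0 ip v.
have nu2 := nv_sq P u; have nv2 := nv_sq P v.
set A := complex.Re (ip u u) in nu2; set C := complex.Re (ip v v) in nv2.
set B := complex.Re (ip u v).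
have [C0|Cpos] := eqVneq C 0.
  have v0 : v = 0 by apply: (re0_eq0 P).
  by rewrite /B v0 ip0r //= normr0 mulr_ge0 // -v0.
have Cp : 0 < C by rewrite lt0r Cpos; case: (ipxx P v).
pose t := - B / C.
have tC : t * C = - B by rewrite /t mulrVK // unitfE.
have key : 0 <= A + t * B + t * B + t * t * C.
  have := (ipxx P (u + t%:C *: v)).1.
  rewrite !(ipDl P) !(ipDr P) !(ipZl P) !(ipZr P) !cjR.
  rewrite !ReD (ipC P v u) -mulrA !ReC ReJ.
  by rewrite -/A -/B -/C; lra.
have E : (A + t * B + t * B + t * t * C) * C = A * C + 2 * B * (t * C) + (t * C) ^+ 2 by ring.
rewrite tC in E.
have BAC : B ^+ 2 <= A * C.
  have := mulr_ge0 key (ltW Cp); rewrite E; lra.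
have nn : A * C = (normv ip u * normv ip v) ^+ 2 by rewrite exprMn nu2 nv2.
rewrite nn in BAC.
have := ler_wsqrtr BAC; rewrite !sqrtr_sqr (ger0_norm (mulr_ge0 nu0 nv0)) //.
Qed.

Lemma CS_im (R : realType) (V : lmodType R[i]) (ip : V -> V -> R[i]) :
  inner_product ip -> forall u v,
  `|complex.Im (ip u v)| <= normv ip u * normv ip v.
Proof.
move=> P u v.
have -> : complex.Im (ip u v) = complex.Re (ip ('i *: u) v) by rewrite (ipZl P) Re_mi.
have -> : normv ip u = normv ip ('i *: u).
  rewrite /normv (ipZl P) (ipZr P) mulrA.
  have -> : conjc 'i * 'i = 1 :> R[i] by apply: complex_eq => /=; ring.
  by rewrite mul1r.
exact: CS_re.
Qed.

Lemma zero_deriv_le (R : realType) (f : R -> R) (b e : R) : 0 <= b -> 0 < e ->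
  (forall s, 0 <= s <= b -> exists2 d, 0 < d & forall h, h != 0 -> `|h| < d ->
      `|f (s + h) - f s| <= e * `|h|) ->
  `|f b - f 0| <= e * b.
Proof.
move=> b0 e0 Hd.
pose S : set R := fun x : R => 0 <= x <= b /\ forall y, 0 <= y <= x -> `|f y - f 0| <= e * y.
have S0 : S 0.
  split; first by rewrite lexx b0.
  move=> y /andP[y0 y1]; have -> : y = 0 by apply/eqP; rewrite eq_le y0 y1.
  by rewrite subrr normr0 mulr0.
have hS : has_sup S.
  split; first by exists 0.
  by exists b => x [/andP[_ ->]].
set c := sup S.
have c0 : 0 <= c by exact: sup_upper_bound.
have cb : c <= b.
  apply: ge_sup; first by exists 0.
  by move=> x [/andP[_ ->]].
have F1 : forall y, 0 <= y < c -> `|f y - f 0| <= e * y.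
  move=> y /andP[y0 yc].
  have cy : 0 < c - y by rewrite subr_gt0.
  have [x [_ Hx] lt] := sup_adherent cy hS.
  apply: Hx; rewrite y0 /=; rewrite -/c in lt; apply: ltW; lra.
have cb' : 0 <= c <= b by rewrite c0 cb.
have [d d0 Hdd] := Hd c cb'.
have F2 : `|f c - f 0| <= e * c.
  have [->|cpos] := eqVneq c 0; first by rewrite subrr normr0 mulr0.
  have cp : 0 < c by rewrite lt0r cpos c0.
  have [m [m0 md mc]] : exists m, [/\ 0 < m, m <= d & m <= c].
    exists (Num.min d c); rewrite lt_min d0 cp; split => //.
    - by rewrite ge_min lexx.
    - by rewrite ge_min lexx orbT.
  have H1 := Hdd (- (m/2)).
  rewrite normrN gtr0_norm ?divr_gt0 // in H1.
  have m2 : - (m/2) != 0 by rewrite oppr_eq0; apply/eqP; lra.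
  have md2 : m/2 < d by lra.
  have {}H1 := H1 m2 md2.
  have cm2 : 0 <= c - m/2 < c by apply/andP; split; lra.
  have H2 := F1 (c - m/2) cm2.
  have -> : f c - f 0 = - (f (c + - (m/2)) - f c) + (f (c - m/2) - f 0) by ring.
  apply: le_trans (ler_normD _ _) _; rewrite normrN.
  apply: le_trans (lerD H1 H2) _; lra.
have Fc : forall y, 0 <= y <= c -> `|f y - f 0| <= e * y.
  move=> y /andP[y0]; rewrite le_eqVlt => /orP[/eqP->//|yc]; apply: F1; lra.
suff -> : b = c by [].
apply/eqP; rewrite eq_le cb andbT; rewrite leNgt; apply/negP => cb2.
have [m [m0 md mc]] : exists m, [/\ 0 < m, m < d & m <= b - c].
  exists (Num.min (d/2) (b - c)).
  have h1 : Num.min (d/2) (b - c) <= d/2 by rewrite ge_min lexx.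
  have h2 : Num.min (d/2) (b - c) <= b - c by rewrite ge_min lexx orbT.
  have h3 : 0 < Num.min (d/2) (b - c) by rewrite lt_min subr_gt0 cb2 divr_gt0.
  split => //; lra.
have Sm : S (c + m).
  split; first by apply/andP; split; lra.
  move=> y /andP[y0 ym]; have [yc|cy] := leP y c; first by apply: Fc; lra.
  have yc0 : y - c != 0 by apply/eqP; lra.
  have ycd : `|y - c| < d by rewrite gtr0_norm; lra.
  have H1 := Hdd (y - c) yc0 ycd.
  have yc1 : 0 < y - c by lra.
  have ey : c + (y - c) = y by ring.
  rewrite (gtr0_norm yc1) ey in H1.
  have -> : f y - f 0 = (f y - f c) + (f c - f 0) by ring.
  apply: le_trans (ler_normD _ _) _; have := lerD H1 F2; lra.
have := sup_upper_bound hS Sm; rewrite -/c; lra.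
Qed.

Lemma small_le0 (R : realType) (x b : R) : 0 <= b -> (forall e, 0 < e -> x <= e * b) -> x <= 0.
Proof.
move=> b0 H; rewrite leNgt; apply/negP => x0.
have e0 : 0 < x / (2 * (b + 1)) by rewrite divr_gt0 // mulr_gt0 //; lra.
have := H _ e0.
have E : x / (2 * (b + 1)) * (b + 1) = x / 2 by field; lra.
have : x / (2 * (b + 1)) * b <= x / (2 * (b + 1)) * (b + 1) by rewrite ler_wpM2l; lra.
lra.
Qed.

Definition zl (R : realType) (f : R -> R[i]) := forall e : R, 0 < e -> exists2 d : R, 0 < d &
  forall h, h != 0 -> `|h| < d -> `|complex.Re (f h)| < e /\ `|complex.Im (f h)| < e.

Lemma inv_bound (R : realType) (h X e : R) : h != 0 -> `|h^-1 * X| < e -> `|X| <= e * `|h|.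
Proof.
move=> h0 H; have -> : X = h * (h^-1 * X) by rewrite mulrA mulfV ?mul1r.
rewrite normrM mulrC; apply: ler_wpM2r; [exact: normr_ge0 | exact: ltW].
Qed.

Lemma zl_bound (R : realType) (g : R -> R[i]) s :
  zl (fun h => (h^-1)%:C * (g (s + h) - g s)) -> forall e, 0 < e -> exists2 d, 0 < d &
  forall h, h != 0 -> `|h| < d ->
    `|complex.Re (g (s + h)) - complex.Re (g s)| <= e * `|h| /\ `|complex.Im (g (s + h)) - complex.Im (g s)| <= e * `|h|.
Proof.
move=> H e e0; have [d d0 Hd] := H e e0; exists d => // h h0 hd.
have [h1 h2] := Hd h h0 hd; rewrite ReC ReD ReN in h1; rewrite ImC ImD ImN in h2.
by split; apply: inv_bound.
Qed.

Lemma const_of_zl (R : realType) (g : R -> R[i]) (b : R) : 0 <= b ->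
  (forall s, 0 <= s <= b -> zl (fun h => (h^-1)%:C * (g (s + h) - g s))) -> g b = g 0.
Proof.
move=> b0 H.
have HR : `|complex.Re (g b) - complex.Re (g 0)| <= 0.
  apply: (small_le0 b0) => e e0.
  apply: (zero_deriv_le (f := fun s => complex.Re (g s))) => // s sb.
  have [d d0 Hd] := zl_bound (H s sb) e0; exists d => // h h0 hd.
  exact: (Hd h h0 hd).1.
have HI : `|complex.Im (g b) - complex.Im (g 0)| <= 0.
  apply: (small_le0 b0) => e e0.
  apply: (zero_deriv_le (f := fun s => complex.Im (g s))) => // s sb.
  have [d d0 Hd] := zl_bound (H s sb) e0; exists d => // h h0 hd.
  exact: (Hd h h0 hd).2.
have n0 : forall x : R, `|x| <= 0 -> x = 0.
  by move=> x; rewrite normr_le0 => /eqP.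
apply: complex_eq; apply/eqP; rewrite -subr_eq0; apply/eqP; exact: n0.
Qed.

Lemma zl_ext (R : realType) (f g : R -> R[i]) :
  (forall h, h != 0 -> f h = g h) -> zl f -> zl g.
Proof.
move=> E H e e0; have [d d0 Hd] := H e e0; exists d => // h h0 hd.
by rewrite -E //; apply: Hd.
Qed.

Lemma zlD (R : realType) (f g : R -> R[i]) : zl f -> zl g -> zl (fun h => f h + g h).
Proof.
move=> Hf Hg e e0.
have e2 : 0 < e / 2 by rewrite divr_gt0.
have [d1 d10 H1] := Hf _ e2; have [d2 d20 H2] := Hg _ e2.
exists (Num.min d1 d2); first by rewrite lt_min d10 d20.
move=> h h0; rewrite lt_min => /andP[hd1 hd2].
have [a1 b1] := H1 h h0 hd1; have [a2 b2] := H2 h h0 hd2.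
rewrite ReD ImD; split.
- by apply: le_lt_trans (ler_normD _ _) _; lra.
- by apply: le_lt_trans (ler_normD _ _) _; lra.
Qed.

Lemma zlN (R : realType) (f : R -> R[i]) : zl f -> zl (fun h => - f h).
Proof.
move=> Hf e e0; have [d d0 Hd] := Hf e e0; exists d => // h h0 hd.
by rewrite ReN ImN !normrN; apply: Hd.
Qed.

Lemma lim_at_opp (R : realType) (f : R -> R) (l : R) :
  lim_at f 0 l -> lim_at (fun h => f (- h)) 0 l.
Proof.
move=> H e e0; have [d d0 Hd] := H e e0; exists d => // t t0 td.
apply: Hd; first by rewrite oppr_eq0.
by rewrite subr0 normrN; rewrite subr0 in td.
Qed.

Lemma lim_at_ext (R : realType) (f g : R -> R) (l : R) :
  (forall h, f h = g h) -> lim_at f 0 l -> lim_at g 0 l.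
Proof.
move=> E H e e0; have [d d0 Hd] := H e e0; exists d => // t t0 td.
by rewrite -E; apply: Hd.
Qed.

Lemma zl_ip (R : realType) (V : lmodType R[i]) (ip : V -> V -> R[i]) :
  inner_product ip -> forall (x y : R -> V) (M : R),
  lim_at (fun h => normv ip (x h)) 0 0 -> (forall h, normv ip (y h) <= M) ->
  zl (fun h => ip (x h) (y h)) /\ zl (fun h => ip (y h) (x h)).
Proof.
move=> P x y M Hx HM.
have M0 : 0 <= M by apply: le_trans (HM 0); exact: nv_ge0.
suff main : forall e, 0 < e -> exists2 d, 0 < d & forall h, h != 0 -> `|h| < d ->
    normv ip (x h) * normv ip (y h) < e.
  split => e e0; have [d d0 Hd] := main e e0; exists d => // h h0 hd;
  have := Hd h h0 hd.
  - by move=> lt; split; apply: le_lt_trans lt; [exact: CS_re | exact: CS_im].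
  - move=> lt; split; apply: le_lt_trans lt; rewrite mulrC; [exact: CS_re | exact: CS_im].
move=> e e0.
have e1 : 0 < e / (M + 1) by rewrite divr_gt0 //; lra.
have [d d0 Hd] := Hx _ e1; exists d => // h h0 hd.
have := Hd h h0; rewrite subr0 => /(_ hd); rewrite subr0 ger0_norm ?nv_ge0 // => lt.
have E : e / (M + 1) * (M + 1) = e by field; lra.
have := ler_pM (nv_ge0 ip (x h)) (nv_ge0 ip (y h)) (ltW lt) (HM h).
have : e / (M + 1) * M < e / (M + 1) * (M + 1) by rewrite ltr_pM2l //; lra.
lra.
Qed.

Lemma zl_zero (R : realType) (f : R -> R[i]) (c : R[i]) :
  zl (fun h => f h - c) ->
  (forall d, 0 < d -> exists h, [/\ h != 0, `|h| < d & f h = 0]) -> c = 0.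
Proof.
move=> H Z.
have K : forall e, 0 < e -> `|complex.Re c| < e /\ `|complex.Im c| < e.
  move=> e e0; have [d d0 Hd] := H e e0; have [h [h0 hd fh]] := Z d d0.
  by have := Hd h h0 hd; rewrite fh sub0r ReN ImN !normrN.
have n0 : forall x : R, (forall e, 0 < e -> `|x| < e) -> x = 0.
  move=> x Hx; apply/eqP; rewrite -normr_le0 leNgt; apply/negP => p.
  by have := Hx _ p; rewrite ltxx.
apply: complex_eq; [apply: n0 => e e0; exact: (K e e0).1 | apply: n0 => e e0; exact: (K e e0).2].
Qed.


Lemma U_add (R : realType) (V : lmodType R[i]) ip D (H : V -> V) U :
  @unitary_group_of R V ip D H U -> forall t x y, U t (x + y) = U t x + U t y.
Proof. by case=> [[L _ _ _ _] _] t x y; have := L t 1 x y; rewrite !scale1r. Qed.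
Lemma U_0 (R : realType) (V : lmodType R[i]) ip D (H : V -> V) U :
  @unitary_group_of R V ip D H U -> forall t, U t 0 = 0.
Proof. by move=> G t; apply: (@addrI _ (U t 0)); rewrite -(U_add G) !addr0. Qed.
Lemma U_scale (R : realType) (V : lmodType R[i]) ip D (H : V -> V) U :
  @unitary_group_of R V ip D H U -> forall t a x, U t (a *: x) = a *: U t x.
Proof.
move=> G t a x; have [[L _ _ _ _] _] := G; have := L t a x 0.
by rewrite !addr0 (U_0 G) addr0.
Qed.
Lemma U_N (R : realType) (V : lmodType R[i]) ip D (H : V -> V) U :
  @unitary_group_of R V ip D H U -> forall t x, U t (- x) = - U t x.
Proof. by move=> G t x; rewrite -scaleN1r (U_scale G) scaleN1r. Qed.
Lemma U_B (R : realType) (V : lmodType R[i]) ip D (H : V -> V) U :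
  @unitary_group_of R V ip D H U -> forall t x y, U t (x - y) = U t x - U t y.
Proof. by move=> G t x y; rewrite (U_add G) (U_N G). Qed.
Lemma U_comp (R : realType) (V : lmodType R[i]) ip D (H : V -> V) U :
  @unitary_group_of R V ip D H U -> forall s t x, U s (U t x) = U (s + t) x.
Proof. by case=> [[_ _ _ G _] _] s t x; rewrite G. Qed.
Lemma U_zero (R : realType) (V : lmodType R[i]) ip D (H : V -> V) U :
  @unitary_group_of R V ip D H U -> forall x, U 0 x = x.
Proof. by case=> [[_ _ G _ _] _]. Qed.
Lemma U_iso (R : realType) (V : lmodType R[i]) ip D (H : V -> V) U :
  @unitary_group_of R V ip D H U -> forall t x y, ip (U t x) (U t y) = ip x y.
Proof. by case=> [[_ G _ _ _] _]. Qed.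
Lemma U_adj (R : realType) (V : lmodType R[i]) ip D (H : V -> V) U :
  @unitary_group_of R V ip D H U -> forall t x y, ip (U t x) y = ip x (U (- t) y).
Proof.
move=> G t x y; rewrite -(U_iso G t x (U (- t) y)) (U_comp G) subrr (U_zero G) //.
Qed.
Lemma U_norm (R : realType) (V : lmodType R[i]) ip D (H : V -> V) U :
  @unitary_group_of R V ip D H U -> forall t x, normv ip (U t x) = normv ip x.
Proof. by move=> G t x; rewrite /normv (U_iso G). Qed.
Lemma U_cont0 (R : realType) (V : lmodType R[i]) ip D (H : V -> V) U :
  @unitary_group_of R V ip D H U -> forall b, lim_at (fun h => normv ip (U h b - b)) 0 0.
Proof.
move=> G b; have [[_ _ _ _ C] _] := G.
by apply: (lim_at_ext _ (C b 0)) => h; rewrite (U_zero G).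
Qed.
Lemma U_gen (R : realType) (V : lmodType R[i]) ip D (H : V -> V) U :
  @unitary_group_of R V ip D H U -> forall x, D x ->
  lim_at (fun h => normv ip ((h^-1)%:C *: (U h x - x) - (- 'i *: H x))) 0 0.
Proof. by case=> [_ G] x Dx; apply/G. Qed.
Lemma U_Dinv (R : realType) (V : lmodType R[i]) ip D (H : V -> V) U :
  @unitary_group_of R V ip D H U -> forall s x, D x -> D (U s x).
Proof.
move=> G s x Dx; have [_ G2] := G.
suff : D (U s x) /\ U s (- 'i *: H x) = - 'i *: H (U s x) by case.
apply/G2; apply: (lim_at_ext _ (U_gen G Dx)) => h.
by rewrite -(U_norm G s) (U_B G) (U_scale G) (U_B G) !(U_comp G) [h + s]addrC.
Qed.

Lemma dense_zero (R : realType) (V : lmodType R[i]) (ip : V -> V -> R[i]) (D : V -> Prop) X :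
  inner_product ip -> (forall x (e : R), 0 < e -> exists y, D y /\ normv ip (x - y) < e) ->
  (forall y, D y -> ip y X = 0) -> X = 0.
Proof.
move=> P Dn HX; apply: (re0_eq0 P).
have H : normv ip X ^+ 2 <= 0.
  apply: (small_le0 (nv_ge0 ip X)) => e e0.
  have [y [Dy ye]] := Dn X e e0.
  rewrite (nv_sq P).
  have -> : ip X X = ip (X - y) X by rewrite (ipBl P) (HX y Dy) subr0.
  apply: le_trans (ler_norm _) _; apply: le_trans (CS_re P _ _) _.
  by apply: ler_wpM2r; [exact: nv_ge0 | exact: ltW].
rewrite -(nv_sq P); apply/eqP; rewrite eq_le H /=; exact: sqr_ge0.
Qed.

Lemma RCN (R : realType) (x : R) : (- x)%:C = - (x%:C) :> R[i].
Proof. by apply: complex_eq => /=; ring. Qed.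

Theorem proposition3 (R : realType) (V : lmodType R[i]) (ip : V -> V -> R[i])
    (D : V -> Prop) (Hon : V -> V) (psi_off psi_on : V)
    (Uon Uhat : R -> V -> V) (L : R) :
  hilbert_space ip ->
  self_adjoint ip D Hon ->
  ip psi_off psi_off = 1 -> ip psi_on psi_on = 1 -> ip psi_off psi_on = 0 ->
  D psi_off ->
  ip psi_off (Hon psi_off) != 0 ->
  (* Uon t = e^{-i t Hon} *)
  unitary_group_of ip D Hon Uon ->
  (* Uhat t = e^{-i t Hhat}, Hhat = Hon - Hon|off><off|Hon / r0, domain D *)
  unitary_group_of ip D
    (fun x => Hon x - (ip psi_off (Hon x) / ip psi_off (Hon psi_off)) *: Hon psi_off)
    Uhat ->
  0 < L ->
  (forall t, 0 <= t <= L -> ip psi_off (Uon t psi_on) = 0) ->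
  forall t, 0 <= t <= L ->
    Uhat t psi_off = psi_off /\ Uhat t psi_on = Uon t psi_on.
Proof.
move=> [P _] [_ _ Dn _] _ _ _ Doff r0 Gon Ghat L0 orth t /andP[t0 tL].
have Hh0 : Hon psi_off - (ip psi_off (Hon psi_off) / ip psi_off (Hon psi_off)) *: Hon psi_off = 0.
  by rewrite divff // scale1r subrr.
have C1 : Uhat t psi_off = psi_off.
  have G : forall y, ip y (Uhat t psi_off) = ip y psi_off.
    move=> y; rewrite -{2}(U_zero Ghat psi_off).
    apply: (const_of_zl (g := fun s => ip y (Uhat s psi_off))) => // s _.
    have lq : lim_at (fun h => normv ip ((h^-1)%:C *: (Uhat h psi_off - psi_off))) 0 0.
      apply: (lim_at_ext _ (U_gen Ghat Doff)) => h.
      by rewrite Hh0 scaler0 subr0.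
    have := (zl_ip P (y := fun _ => Uhat (- s) y) lq (fun h => lexx _)).2.
    apply: zl_ext => h _.
    rewrite (ipZr P) (ipBr P) !(U_adj Ghat) opprK (U_comp Ghat) //.
  apply/eqP; rewrite -subr_eq0; apply/eqP; apply: (re0_eq0 P).
  by rewrite (ipBr P) G subrr.
split => //.
have SB : forall s, 0 <= s <= L -> ip (Hon psi_off) (Uon s psi_on) = 0.
  move=> s /andP[s0 sL].
  set b := Uon s psi_on.
  have lq := U_gen Gon Doff.
  have Z := (zl_ip P (y := fun _ => b) lq (fun h => lexx _)).1.
  have E : ip (- 'i *: Hon psi_off) b = 0.
    apply: (zl_zero (f := fun k => ip ((k^-1)%:C *: (Uon k psi_off - psi_off)) b)).
      by apply: zl_ext Z => h _; rewrite (ipBl P).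
    move=> d d0.
    have fz : forall k, 0 <= s - k <= L ->
        ip ((k^-1)%:C *: (Uon k psi_off - psi_off)) b = 0.
      move=> k sk; rewrite (ipZl P) (ipBl P) (U_adj Gon) /b (U_comp Gon).
      rewrite (orth (- k + s)) ?(orth s) ?subrr ?mulr0 ?s0 ?sL // addrC.
      exact: sk.
    have [m [m0 md mL]] : exists m, [/\ 0 < m, m < d & m <= L / 2].
      exists (Num.min (d/2) (L/2)).
      have h1 : Num.min (d/2) (L/2) <= d/2 by rewrite ge_min lexx.
      have h2 : Num.min (d/2) (L/2) <= L/2 by rewrite ge_min lexx orbT.
      have h3 : 0 < Num.min (d/2) (L/2) by rewrite lt_min !divr_gt0.
      split => //; lra.
    have [sl|sg] := leP s (L/2).
    - exists (- m); rewrite oppr_eq0 normrN gtr0_norm // fz //; last by apply/andP; split; lra.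
      by split => //; apply/eqP; lra.
    - exists m; rewrite gtr0_norm // fz //; last by apply/andP; split; lra.
      by split => //; apply/eqP; lra.
  rewrite (ipZl P) in E.
  have -> : ip (Hon psi_off) b = - ('i * (conjc (- 'i) * ip (Hon psi_off) b)).
    by case: (ip (Hon psi_off) b) => x y; apply: complex_eq => /=; ring.
  by rewrite E mulr0 oppr0.
set Hh := (fun x => Hon x - (ip psi_off (Hon x) / ip psi_off (Hon psi_off)) *: Hon psi_off) in Ghat.
have G2 : forall y, D y -> ip (Uhat t y) (Uon t psi_on) = ip y psi_on.
  move=> y Dy.
  have -> : ip y psi_on = ip (Uhat 0 y) (Uon 0 psi_on) by rewrite !(U_zero Ghat) (U_zero Gon).
  apply: (const_of_zl (g := fun s => ip (Uhat s y) (Uon s psi_on))) => // s /andP[s0 st].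
  set a := Uhat s y; set b := Uon s psi_on.
  have Da : D a := U_Dinv Ghat s Dy.
  set v1 := - 'i *: Hh a; set v2 := - 'i *: Hon a.
  have Mb : forall h, normv ip (Uon h b) <= normv ip b by move=> h; rewrite (U_norm Gon).
  have lg1 : lim_at (fun h => normv ip ((h^-1)%:C *: (Uhat h a - a) - v1)) 0 0 := U_gen Ghat Da.
  have lg2 : lim_at (fun h => normv ip ((h^-1)%:C *: (Uon h a - a) - v2)) 0 0 := U_gen Gon Da.
  have T1 := (zl_ip P (y := fun h => Uon h b) (M := normv ip b) lg1 Mb).1.
  have T2 := (zl_ip P (y := fun _ => v1) (U_cont0 Gon b) (fun h => lexx _)).2.
  have T3 := zlN (zl_ip P (y := fun _ => b) (lim_at_opp lg2) (fun h => lexx _)).1.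
  have X23 : ip v1 b = ip v2 b.
    apply/eqP; rewrite -subr_eq0; apply/eqP.
    rewrite /v1 /v2 /Hh !(ipZl P) -mulrBr (ipBl P) (ipZl P) (SB s) ?mulr0 ?subr0 ?subrr ?mulr0 //.
    by rewrite s0 /=; apply: le_trans tL.
  clearbody v1 v2.
  apply: zl_ext (zlD (zlD T1 T2) T3) => h h0 /=.
  have e1 : Uhat (s + h) y = Uhat h a by rewrite /a (U_comp Ghat) addrC.
  have e2 : Uon (s + h) psi_on = Uon h b by rewrite /b (U_comp Gon) addrC.
  rewrite e1 e2 -/a -/b.
  rewrite !(ipBl P) !(ipZl P) !cjR !(ipBl P) !(ipBr P) X23.
  rewrite (U_adj Gon (- h) a b) opprK invrN RCN.
  ring.
set w := Uon t psi_on.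
have X0 : Uhat (- t) w - psi_on = 0.
  apply: (dense_zero P Dn) => y Dy.
  by rewrite (ipBr P) -(opprK t) -(U_adj Ghat) opprK G2 // subrr.
have -> : psi_on = Uhat (- t) w by apply/eqP; rewrite eq_sym -subr_eq0 X0.
by rewrite (U_comp Ghat) subrr (U_zero Ghat).
Qed.
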